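(* Let $(V,\|\cdot\|)$ be a normed plane and let $x,y\in V$ be distinct points such that $[xy]$ is parallel to a nondegenerate segment contained in the unit circle $S$. Let $p$ and $q$ be the centers of the two circles which contain $[xy]$ as a maximal segment, and let $l_p$ and $l_q$ be the lines through $p$ and $q$, respectively, parallel to $\langle xy\rangle$. Then $\mathrm{bis}(x,y)\cap\mathrm{conv}(l_p\cup l_q)$ is a curve from $p$ to $q$ which is homeomorphic to a compact interval.
   Context: A normed (Minkowski) plane $(V,\|\cdot\|)$ is a two-dimensional real vector space with a norm; $S=\{v:\|v\|=1\}$ is its unit circle. For $x,y\in V$, $[xy]$ denotes the closed segment and $\langle xy\rangle$ the line through $x,y$. For distinct $x,y$, $\mathrm{bis}(x,y)=\{z\in V:\|z-x\|=\|z-y\|\}$. A circle with center $c$ and radius $\lambda>0$ is $c+\lambda S$. A maximal segment of a circle is a nondegenerate segment contained in the circle that is not properly contained in any other segment contained in that circle. Fact used in the statement: if $[xy]$ is parallel to a nondegenerate segment of $S$, then there are exactly two circles containing $[xy]$ as a maximal segment, and their centers lie in the two different open half-planes determined by $\langle xy\rangle$. *)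

(* Defs.v *)
(* the normed plane is modelled as R*R equipped with an
   arbitrary norm N (every 2-dimensional real normed space is linearly
   isometric to such a model). *)
From Stdlib Require Import Reals.
Open Scope R_scope.

Definition pt := (R * R)%type.
Definition vadd (u v : pt) : pt := (fst u + fst v, snd u + snd v).
Definition vsub (u v : pt) : pt := (fst u - fst v, snd u - snd v).
Definition vscal (t : R) (v : pt) : pt := (t * fst v, t * snd v).
Definition vzero : pt := (0, 0).

Definition is_norm (N : pt -> R) : Prop :=
  (forall v, N v = 0 -> v = vzero) /\
  (forall t v, N (vscal t v) = Rabs t * N v) /\
  (forall u v, N (vadd u v) <= N u + N v).

Definition segment (x y : pt) (z : pt) : Prop :=
  exists t, 0 <= t <= 1 /\ z = vadd (vscal (1 - t) x) (vscal t y).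

Definition line_dir (c d : pt) (z : pt) : Prop :=
  exists t, z = vadd c (vscal t d).

Definition unit_circle (N : pt -> R) (z : pt) : Prop := N z = 1.
Definition circle (N : pt -> R) (c : pt) (lam : R) (z : pt) : Prop :=
  N (vsub z c) = lam.

Definition subset (A B : pt -> Prop) : Prop := forall z, A z -> B z.

Definition parallel (u v : pt) : Prop := fst u * snd v - snd u * fst v = 0.

Definition maximal_segment (C : pt -> Prop) (x y : pt) : Prop :=
  x <> y /\ subset (segment x y) C /\
  forall u v, u <> v -> subset (segment u v) C ->
    subset (segment x y) (segment u v) -> subset (segment u v) (segment x y).

Definition center_of_maximal_circle (N : pt -> R) (x y c : pt) : Prop :=
  exists lam, 0 < lam /\ maximal_segment (circle N c lam) x y.

Definition bis (N : pt -> R) (x y : pt) (z : pt) : Prop :=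
  N (vsub z x) = N (vsub z y).

Definition convex (A : pt -> Prop) : Prop :=
  forall u v t, A u -> A v -> 0 <= t <= 1 ->
    A (vadd (vscal (1 - t) u) (vscal t v)).
Definition conv (A : pt -> Prop) (z : pt) : Prop :=
  forall B, convex B -> subset A B -> B z.

Definition union (A B : pt -> Prop) (z : pt) : Prop := A z \/ B z.
Definition inter (A B : pt -> Prop) (z : pt) : Prop := A z /\ B z.

(* A is a curve from p to q homeomorphic to the compact interval [0,1]:
   there is a homeomorphism f : [0,1] -> A (with inverse g, both continuous
   for the norm topology / relative topologies) with f 0 = p, f 1 = q. *)
Definition arc_from_to (N : pt -> R) (A : pt -> Prop) (p q : pt) : Prop :=
  exists (f : R -> pt) (g : pt -> R),
    (forall t, 0 <= t <= 1 -> A (f t)) /\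
    (forall z, A z -> 0 <= g z <= 1) /\
    (forall t, 0 <= t <= 1 -> g (f t) = t) /\
    (forall z, A z -> f (g z) = z) /\
    (forall t, 0 <= t <= 1 -> forall eps, 0 < eps -> exists delta, 0 < delta /\
       forall s, 0 <= s <= 1 -> Rabs (s - t) < delta -> N (vsub (f s) (f t)) < eps) /\
    (forall z, A z -> forall eps, 0 < eps -> exists delta, 0 < delta /\
       forall w, A w -> N (vsub w z) < delta -> Rabs (g w - g z) < eps) /\
    f 0 = p /\ f 1 = q.

(* Main.v *)
Require Import Defs.
From Stdlib Require Import Reals Lra Psatz ClassicalEpsilon.
Open Scope R_scope.

Ltac peq := unfold vadd, vsub, vscal, vzero; apply injective_projections; simpl; ring.

Lemma N_scal N (HN : is_norm N) t v : N (vscal t v) = Rabs t * N v.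
Proof. destruct HN as [_ [H _]]. apply H. Qed.
Lemma N_tri N (HN : is_norm N) u v : N (vadd u v) <= N u + N v.
Proof. destruct HN as [_ [_ H]]. apply H. Qed.
Lemma N_zero N (HN : is_norm N) : N vzero = 0.
Proof. replace vzero with (vscal 0 vzero) by peq. rewrite (N_scal N HN), Rabs_R0; ring. Qed.
Lemma N_opp N (HN : is_norm N) v : N (vscal (-1) v) = N v.
Proof. rewrite (N_scal N HN). rewrite Rabs_left by lra. ring. Qed.
Lemma N_nonneg N (HN : is_norm N) v : 0 <= N v.
Proof.
  assert (H := N_tri N HN v (vscal (-1) v)).
  replace (vadd v (vscal (-1) v)) with vzero in H by peq.
  rewrite (N_zero N HN), (N_opp N HN) in H. lra.
Qed.
Lemma N_pos N (HN : is_norm N) v : v <> vzero -> 0 < N v.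
Proof.
  intro H. destruct (N_nonneg N HN v) as [h|h]; auto.
  exfalso. apply H. destruct HN as [H0 _]. apply H0. auto.
Qed.
Lemma N_rev N (HN : is_norm N) a b : Rabs (N a - N b) <= N (vsub a b).
Proof.
  apply Rabs_le.
  assert (H1 := N_tri N HN (vsub a b) b).
  replace (vadd (vsub a b) b) with a in H1 by peq.
  assert (H2 := N_tri N HN (vscal (-1) (vsub a b)) a).
  replace (vadd (vscal (-1) (vsub a b)) a) with b in H2 by peq.
  rewrite (N_opp N HN) in H2. lra.
Qed.

Definition cvx (h : R -> R) := forall u v a, 0 <= a <= 1 ->
  h ((1-a)*u + a*v) <= (1-a) * h u + a * h v.

Lemma h_cvx N (HN : is_norm N) W d :
  cvx (fun t => N (vadd W (vscal t d))).
Proof.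
  intros u v a Ha.
  replace (vadd W (vscal ((1-a)*u + a*v) d)) with
    (vadd (vscal (1-a) (vadd W (vscal u d))) (vscal a (vadd W (vscal v d)))) by peq.
  eapply Rle_trans; [apply (N_tri N HN)|].
  rewrite !(N_scal N HN), !Rabs_pos_eq by lra. lra.
Qed.

Lemma three_pt h : cvx h -> forall a b c, a < b < c ->
  (c-a) * h b <= (c-b) * h a + (b-a) * h c.
Proof.
  intros H a b c Habc.
  assert (Hca: 0 < c - a) by lra.
  set (al := (b-a)/(c-a)).
  assert (Hal: al * (c-a) = b - a) by (unfold al; field; lra).
  assert (Hal2: 0 <= al <= 1) by (split; nra).
  specialize (H a c al Hal2).
  assert (E : (1-al)*a + al*c = b).
  { replace ((1-al)*a+al*c) with (a + al*(c-a)) by ring. rewrite Hal. ring. }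
  rewrite E in H.
  assert (E2: (c-a)*((1-al)*h a + al*h c) = (c-b)*h a + (b-a)*h c).
  { replace ((c-a)*((1-al)*h a + al*h c)) with
      ((c-a)*h a - (al*(c-a))*h a + (al*(c-a))*h c) by ring.
    rewrite Hal. ring. }
  rewrite <- E2. apply Rmult_le_compat_l; lra.
Qed.

Lemma flat_ge h : cvx h -> forall a b m, a < b ->
  (forall t, a <= t <= b -> h t = m) -> forall t, m <= h t.
Proof.
  intros H a b m Hab Hf t.
  destruct (Rlt_le_dec b t) as [Hbt|Hbt].
  - assert (T := three_pt h H a b t (conj Hab Hbt)).
    rewrite (Hf a), (Hf b) in T by lra. nra.
  - destruct (Rlt_le_dec t a) as [Hta|Hta].
    + assert (T := three_pt h H t a b (conj Hta Hab)).
      rewrite (Hf a), (Hf b) in T by lra. nra.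
    + rewrite Hf by lra. lra.
Qed.

Lemma cvx_le h : cvx h -> forall a b m t, a <= t <= b -> h a <= m -> h b <= m -> h t <= m.
Proof.
  intros H a b m t Ht Ha Hb.
  destruct (Req_dec t a) as [->|Hta]; auto.
  destruct (Req_dec t b) as [->|Htb]; auto.
  assert (T := three_pt h H a t b ltac:(lra)). nra.
Qed.

Lemma F_mono h : cvx h -> forall t t', t <= t' -> h t - h (t-1) <= h t' - h (t'-1).
Proof.
  intros H t t' Ht.
  destruct (Req_dec t t') as [->|Hne]; [lra|].
  assert (T1 := three_pt h H (t-1) t t' ltac:(lra)).
  assert (T2 := three_pt h H (t-1) (t'-1) t' ltac:(lra)).
  replace (t' - 1 - (t - 1)) with (t'-t) in T2 by ring.
  replace (t' - (t - 1)) with (t'-t+1) in T1, T2 by ring.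
  replace (t - (t-1)) with 1 in T1 by ring.
  replace (t' - (t'-1)) with 1 in T2 by ring.
  nra.
Qed.
Definition kap (d v : pt) : R := fst d * snd v - snd d * fst v.

Lemma kap_add d u v : kap d (vadd u v) = kap d u + kap d v.
Proof. unfold kap, vadd; simpl; ring. Qed.
Lemma kap_sub d u v : kap d (vsub u v) = kap d u - kap d v.
Proof. unfold kap, vsub; simpl; ring. Qed.
Lemma kap_scal d t v : kap d (vscal t v) = t * kap d v.
Proof. unfold kap, vscal; simpl; ring. Qed.
Lemma kap_dd d t : kap d (vscal t d) = 0.
Proof. unfold kap, vscal; simpl; ring. Qed.
Lemma kap_line d W t : kap d (vadd W (vscal t d)) = kap d W.
Proof. rewrite kap_add, kap_dd; ring. Qed.

Lemma d_sq d : d <> vzero -> 0 < fst d * fst d + snd d * snd d.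
Proof.
  intro H. destruct d as [d1 d2]; simpl.
  destruct (Req_dec d1 0); destruct (Req_dec d2 0); try nra.
  exfalso; apply H; subst; reflexivity.
Qed.

Lemma kap0_par d v : d <> vzero -> kap d v = 0 -> exists u, v = vscal u d.
Proof.
  intros Hd Hk. assert (D := d_sq d Hd).
  destruct d as [d1 d2], v as [v1 v2]. unfold kap, vscal in *; simpl in *.
  exists ((d1*v1+d2*v2)/(d1*d1+d2*d2)).
  apply injective_projections; simpl.
  - apply (Rmult_eq_reg_r (d1*d1+d2*d2)); [|lra].
    field_simplify; [|lra].
    replace (v1 * d1 ^ 2 + v1 * d2 ^ 2) with (d1 ^ 2 * v1 + d1 * d2 * v2 - d2*(d1*v2 - d2*v1)) by ring.
    rewrite Hk. ring.
  - apply (Rmult_eq_reg_r (d1*d1+d2*d2)); [|lra].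
    field_simplify; [|lra].
    replace (v2 * d1 ^ 2 + v2 * d2 ^ 2) with (d1 * d2 * v1 + d2 ^ 2 * v2 + d1*(d1*v2 - d2*v1)) by ring.
    rewrite Hk. ring.
Qed.

Lemma scal_inj d a b : d <> vzero -> vscal a d = vscal b d -> a = b.
Proof.
  intros Hd H. assert (D := d_sq d Hd).
  destruct d as [d1 d2]. unfold vscal in H; simpl in *.
  injection H; intros H2 H1.
  assert ((a-b)*(d1*d1+d2*d2) = 0).
  { replace ((a-b)*(d1*d1+d2*d2)) with ((a*d1 - b*d1)*d1 + (a*d2-b*d2)*d2) by ring.
    rewrite H1, H2. ring. }
  apply Rmult_integral in H0. destruct H0; lra.
Qed.

Lemma line_inj d x a b : d <> vzero -> vadd x (vscal a d) = vadd x (vscal b d) -> a = b.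
Proof.
  intros Hd H. apply (scal_inj d); auto.
  replace (vscal a d) with (vsub (vadd x (vscal a d)) x) by peq.
  rewrite H. peq.
Qed.

Lemma flat_kap N (HN : is_norm N) W d a b r : d <> vzero -> a < b ->
  (forall t, a <= t <= b -> N (vadd W (vscal t d)) = r) -> kap d W <> 0.
Proof.
  intros Hd Hab Hf Hk.
  destruct (kap0_par d W Hd Hk) as [c ->].
  assert (Nd := N_pos N HN d Hd).
  assert (E : forall t, N (vadd (vscal c d) (vscal t d)) = Rabs (c+t) * N d).
  { intro t. replace (vadd (vscal c d) (vscal t d)) with (vscal (c+t) d) by peq.
    apply (N_scal N HN). }
  assert (Ha := Hf a ltac:(lra)). assert (Hb := Hf b ltac:(lra)).
  assert (Hm := Hf ((a+b)/2) ltac:(lra)).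
  rewrite E in Ha, Hb, Hm.
  assert (A1 : Rabs (c+a) = Rabs (c+b)) by (apply (Rmult_eq_reg_r (N d)); lra).
  assert (A2 : Rabs (c+a) = Rabs (c+(a+b)/2)) by (apply (Rmult_eq_reg_r (N d)); lra).
  revert A1 A2. unfold Rabs.
  destruct (Rcase_abs (c+a)); destruct (Rcase_abs (c+b)); destruct (Rcase_abs (c+(a+b)/2)); lra.
Qed.

Lemma support N (HN : is_norm N) W d a b r : d <> vzero -> a < b ->
  (forall t, a <= t <= b -> N (vadd W (vscal t d)) = r) ->
  forall v, r * Rabs (kap d v) <= N v * Rabs (kap d W).
Proof.
  intros Hd Hab Hf v.
  assert (Hge := flat_ge _ (h_cvx N HN W d) a b r Hab Hf).
  assert (HkW := flat_kap N HN W d a b r Hd Hab Hf).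
  destruct (Req_dec (kap d v) 0) as [Hv|Hv].
  - rewrite Hv, Rabs_R0, Rmult_0_r.
    apply Rmult_le_pos; [apply (N_nonneg N HN)|apply Rabs_pos].
  - set (mu := kap d W / kap d v).
    assert (Hmu : mu * kap d v = kap d W) by (unfold mu; field; auto).
    assert (Hk : kap d (vsub (vscal mu v) W) = 0).
    { rewrite kap_sub, kap_scal, Hmu. ring. }
    destruct (kap0_par _ _ Hd Hk) as [u Hu].
    assert (E : vscal mu v = vadd W (vscal u d)).
    { rewrite <- Hu. peq. }
    assert (H1 := Hge u). simpl in H1. rewrite <- E, (N_scal N HN) in H1.
    assert (H2 : Rabs mu * Rabs (kap d v) = Rabs (kap d W)) by (rewrite <- Rabs_mult, Hmu; auto).
    assert (H3 := Rabs_pos_lt _ Hv).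
    assert (H4 := N_nonneg N HN v).
    apply Rle_trans with (Rabs mu * N v * Rabs (kap d v)).
    + apply Rmult_le_compat_r; lra.
    + rewrite <- H2. nra.
Qed.
Lemma core N (HN : is_norm N) d W0 lam W a b r : d <> vzero -> 0 < lam ->
  (forall u, -1 <= u <= 0 -> N (vadd W0 (vscal u d)) = lam) ->
  (forall u, N (vadd W0 (vscal u d)) = lam -> -1 <= u <= 0) ->
  a < b -> b - a > 1 ->
  (forall t, a <= t <= b -> N (vadd W (vscal t d)) = r) ->
  Rabs (kap d W) <= Rabs (kap d W0) -> False.
Proof.
  intros Hd Hlam Hf0 Hx0 Hab Hba Hf Hk.
  assert (k0 := flat_kap N HN W0 d (-1) 0 lam Hd ltac:(lra) Hf0).
  assert (k := flat_kap N HN W d a b r Hd Hab Hf).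
  assert (S1 := support N HN W0 d (-1) 0 lam Hd ltac:(lra) Hf0 (vadd W (vscal a d))).
  rewrite kap_line, Hf in S1 by lra.
  assert (S2 := support N HN W d a b r Hd Hab Hf (vadd W0 (vscal 0 d))).
  rewrite kap_line, Hf0 in S2 by lra.
  assert (A0 := Rabs_pos_lt _ k0). assert (A := Rabs_pos_lt _ k).
  assert (Eq : lam * Rabs (kap d W) = r * Rabs (kap d W0)) by lra.
  assert (Hr : r <= lam) by nra.
  assert (Hr0 : 0 < r) by nra.
  set (mu := kap d W0 / kap d W).
  assert (Hmu : mu * kap d W = kap d W0) by (unfold mu; field; auto).
  assert (Hmr : Rabs mu * r = lam).
  { assert (H2 : Rabs mu * Rabs (kap d W) = Rabs (kap d W0)) by (rewrite <- Rabs_mult, Hmu; auto).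
    apply (Rmult_eq_reg_r (Rabs (kap d W))); [|lra]. nra. }
  assert (Pt : forall t, a <= t <= b -> exists u, vscal mu (vadd W (vscal t d)) = vadd W0 (vscal u d) /\ -1 <= u <= 0).
  { intros t Ht.
    assert (Hk' : kap d (vsub (vscal mu (vadd W (vscal t d))) W0) = 0).
    { rewrite kap_sub, kap_scal, kap_line, Hmu. ring. }
    destruct (kap0_par _ _ Hd Hk') as [u Hu].
    assert (E : vscal mu (vadd W (vscal t d)) = vadd W0 (vscal u d)).
    { rewrite <- Hu. peq. }
    exists u. split; auto. apply Hx0. rewrite <- E, (N_scal N HN), Hf; auto. }
  destruct (Pt a ltac:(lra)) as [ua [Ea Ua]].
  destruct (Pt b ltac:(lra)) as [ub [Eb Ub]].
  assert (Hu : mu * (b - a) = ub - ua).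
  { apply (scal_inj d); auto.
    replace (vscal (ub - ua) d) with (vsub (vadd W0 (vscal ub d)) (vadd W0 (vscal ua d))) by peq.
    rewrite <- Ea, <- Eb. peq. }
  assert (Rabs mu * (b - a) <= 1).
  { replace (b-a) with (Rabs (b-a)) by (apply Rabs_pos_eq; lra).
    rewrite <- Rabs_mult, Hu. apply Rabs_le. lra. }
  nra.
Qed.
Lemma sub_nz x y : x <> y -> vsub y x <> vzero.
Proof.
  intros H E. apply H. destruct x as [x1 x2], y as [y1 y2].
  unfold vsub, vzero in E; simpl in E. injection E; intros. f_equal; lra.
Qed.

Lemma seg_eq x y t : vadd (vscal (1-t) x) (vscal t y) = vadd x (vscal t (vsub y x)).
Proof. peq. Qed.

Lemma circ_flat N (HN : is_norm N) x y c lam : x <> y ->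
  maximal_segment (circle N c lam) x y ->
  (forall u, -1 <= u <= 0 -> N (vadd (vsub c x) (vscal u (vsub y x))) = lam) /\
  (forall u, N (vadd (vsub c x) (vscal u (vsub y x))) = lam -> -1 <= u <= 0).
Proof.
  intros Hxy [_ [Hsub Hmax]].
  assert (Hd := sub_nz x y Hxy).
  set (d := vsub y x) in *. set (W := vsub c x).
  assert (Key : forall tau, N (vsub (vadd x (vscal tau d)) c) = N (vadd W (vscal (-tau) d))).
  { intro tau. rewrite <- (N_opp N HN). f_equal. unfold W. peq. }
  assert (F1 : forall u, -1 <= u <= 0 -> N (vadd W (vscal u d)) = lam).
  { intros u Hu. replace u with (- - u) by ring. rewrite <- Key.
    apply Hsub. exists (-u). split; [lra|]. rewrite seg_eq. reflexivity. }
  split; auto.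
  intros u0 Hu0.
  assert (Hge := flat_ge _ (h_cvx N HN W d) (-1) 0 lam ltac:(lra) F1).
  set (al := Rmin u0 (-1)). set (be := Rmax u0 0).
  assert (Hal : al <= -1 /\ al <= u0) by (split; [apply Rmin_r|apply Rmin_l]).
  assert (Hbe : 0 <= be /\ u0 <= be) by (split; [apply Rmax_r|apply Rmax_l]).
  assert (Nal : N (vadd W (vscal al d)) = lam).
  { unfold al, Rmin. destruct (Rle_dec u0 (-1)); [auto|apply F1; lra]. }
  assert (Nbe : N (vadd W (vscal be d)) = lam).
  { unfold be, Rmax. destruct (Rle_dec u0 0); [apply F1; lra|auto]. }
  assert (Fl : forall u, al <= u <= be -> N (vadd W (vscal u d)) = lam).
  { intros u Hu. apply Rle_antisym; [|apply Hge].
    apply (cvx_le _ (h_cvx N HN W d) al be); auto; lra. }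
  set (U := vadd x (vscal (-be) d)). set (V := vadd x (vscal (-al) d)).
  assert (SegUV : forall t, vadd (vscal (1-t) U) (vscal t V) = vadd x (vscal ((1-t)*(-be) + t*(-al)) d)).
  { intro t. unfold U, V. peq. }
  assert (HUV : U <> V).
  { intro E. unfold U, V in E. apply line_inj in E; auto. lra. }
  assert (Sub1 : subset (segment U V) (circle N c lam)).
  { intros z [t [Ht ->]]. unfold circle. rewrite SegUV, Key. apply Fl. nra. }
  assert (Sub2 : subset (segment x y) (segment U V)).
  { intros z [t [Ht ->]]. exists ((t + be)/(be - al)).
    assert (0 < be - al) by lra.
    split.
    - split.
      + apply Rmult_le_pos; [lra|]. left. apply Rinv_0_lt_compat. lra.
      + apply (Rmult_le_reg_r (be - al)); [lra|]. unfold Rdiv.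
        rewrite Rmult_assoc, Rinv_l by lra. lra.
    - rewrite SegUV, seg_eq. fold d. f_equal. f_equal. field. lra. }
  assert (H3 := Hmax U V HUV Sub1 Sub2).
  destruct (H3 U) as [t1 [Ht1 E1]].
  { exists 0. split; [lra|]. peq. }
  destruct (H3 V) as [t2 [Ht2 E2]].
  { exists 1. split; [lra|]. peq. }
  rewrite seg_eq in E1, E2. fold d in E1, E2. unfold U, V in E1, E2.
  apply line_inj in E1; auto. apply line_inj in E2; auto.
  lra.
Qed.
Lemma lip_cont (f : R -> R) K : 0 <= K ->
  (forall u v, Rabs (f u - f v) <= K * Rabs (u - v)) -> continuity f.
Proof.
  intros HK H x. unfold continuity_pt, continue_in, limit1_in, limit_in.
  intros eps Heps. exists (eps/(K+1)). split; [apply Rdiv_lt_0_compat; lra|].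
  intros z [_ Hz]. simpl in *. unfold R_dist in *.
  assert (Hz2 : Rabs (z - x) * (K+1) < eps).
  { apply (Rmult_lt_compat_r (K+1)) in Hz; [|lra]. unfold Rdiv in Hz.
    rewrite Rmult_assoc, Rinv_l in Hz by lra. lra. }
  assert (P := Rabs_pos (z-x)).
  eapply Rle_lt_trans; [apply H|]. nra.
Qed.

Lemma h_lip N (HN : is_norm N) W d u v :
  Rabs (N (vadd W (vscal u d)) - N (vadd W (vscal v d))) <= N d * Rabs (u - v).
Proof.
  eapply Rle_trans; [apply (N_rev N HN)|].
  replace (vsub (vadd W (vscal u d)) (vadd W (vscal v d))) with (vscal (u-v) d) by peq.
  rewrite (N_scal N HN). lra.
Qed.

Lemma zero_exists N (HN : is_norm N) W d : d <> vzero ->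
  exists t, N (vadd W (vscal t d)) - N (vadd W (vscal (t-1) d)) = 0.
Proof.
  intros Hd.
  set (h := fun t => N (vadd W (vscal t d))).
  assert (Hc := h_cvx N HN W d). fold h in Hc.
  assert (Nd := N_pos N HN d Hd).
  assert (NW := N_nonneg N HN W).
  assert (h0 : h 0 = N W) by (unfold h; f_equal; peq).
  assert (hlow : forall t, Rabs t * N d - N W <= h t).
  { intro t. unfold h. rewrite <- (N_scal N HN).
    assert (H := N_tri N HN (vadd W (vscal t d)) (vscal (-1) W)).
    rewrite (N_opp N HN) in H.
    replace (vadd (vadd W (vscal t d)) (vscal (-1) W)) with (vscal t d) in H by peq. lra. }
  set (T := 2 * N W / N d + 2).
  assert (HT : T * N d = 2 * N W + 2 * N d) by (unfold T; field; lra).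
  assert (HT1 : 1 < T).
  { unfold T. assert (0 <= 2 * N W / N d) by (apply Rmult_le_pos; [lra|left; apply Rinv_0_lt_compat; lra]). lra. }
  assert (Pos : 0 < h T - h (T-1)).
  { assert (T3 := three_pt h Hc 0 (T-1) T ltac:(lra)).
    assert (L := hlow T). rewrite Rabs_pos_eq in L by lra.
    nra. }
  assert (Neg : h (-T) - h (-T-1) < 0).
  { assert (T3 := three_pt h Hc (-T-1) (-T) 0 ltac:(lra)).
    assert (L := hlow (-T-1)). rewrite Rabs_left in L by lra.
    nra. }
  assert (Cont : continuity (fun t => h t - h (t-1))).
  { apply (lip_cont _ (2 * N d)); [lra|].
    intros u v. unfold h.
    assert (A1 := h_lip N HN W d u v). assert (A2 := h_lip N HN W d (u-1) (v-1)).
    replace (u - 1 - (v - 1)) with (u - v) in A2 by ring.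
    replace (N (vadd W (vscal u d)) - N (vadd W (vscal (u - 1) d)) -
      (N (vadd W (vscal v d)) - N (vadd W (vscal (v - 1) d)))) with
      ((N (vadd W (vscal u d)) - N (vadd W (vscal v d))) -
      (N (vadd W (vscal (u-1) d)) - N (vadd W (vscal (v - 1) d)))) by ring.
    eapply Rle_trans; [apply Rabs_triang|]. rewrite Rabs_Ropp. lra. }
  destruct (IVT _ (-T) T Cont ltac:(lra) Neg Pos) as [z [_ Hz]].
  exists z. exact Hz.
Qed.

Lemma two_zeros_flat h : cvx h -> forall t1 t2, t1 < t2 ->
  h t1 = h (t1-1) -> h t2 = h (t2-1) -> forall t, t1 - 1 <= t <= t2 -> h t = h t1.
Proof.
  intros Hc t1 t2 H12 E1 E2 t Ht.
  assert (A := three_pt h Hc (t1-1) t1 t2 ltac:(lra)).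
  assert (B := three_pt h Hc (t1-1) (t2-1) t2 ltac:(lra)).
  assert (G1 : h t1 <= h t2) by nra.
  assert (G2 : h t2 <= h t1) by nra.
  apply Rle_antisym.
  - apply (cvx_le h Hc (t1-1) t2); auto; lra.
  - destruct (Rlt_le_dec t t1) as [Hl|Hl].
    + assert (C := three_pt h Hc t t1 t2 ltac:(lra)). nra.
    + destruct (Req_dec t t1) as [->|Hne]; [lra|].
      assert (C := three_pt h Hc (t1-1) t1 t ltac:(lra)). nra.
Qed.
Lemma abs_le_inv x y : Rabs x <= y -> -y <= x <= y.
Proof. unfold Rabs; destruct (Rcase_abs x); intros; lra. Qed.

Lemma tau_cont (F : R -> R -> R) (tau : R -> R) K : 0 <= K ->
  (forall s t t', t <= t' -> F s t <= F s t') ->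
  (forall s, 0 <= s <= 1 -> forall t1 t2, F s t1 = 0 -> F s t2 = 0 -> t1 = t2) ->
  (forall s s' t, Rabs (F s t - F s' t) <= K * Rabs (s - s')) ->
  (forall s, F s (tau s) = 0) ->
  forall s, 0 <= s <= 1 -> forall eps, 0 < eps -> exists del, 0 < del /\
    forall s', 0 <= s' <= 1 -> Rabs (s' - s) < del -> Rabs (tau s' - tau s) < eps.
Proof.
  intros HK Hmon Huniq Hlip Htau s Hs eps Heps.
  set (Fp := F s (tau s + eps)). set (Fm := F s (tau s - eps)).
  assert (HFp : 0 < Fp).
  { assert (A := Hmon s (tau s) (tau s + eps) ltac:(lra)). rewrite Htau in A.
    destruct A as [A|A]; auto. exfalso.
    assert (B := Huniq s Hs _ _ (Htau s) (eq_sym A)). lra. }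
  assert (HFm : Fm < 0).
  { assert (A := Hmon s (tau s - eps) (tau s) ltac:(lra)). rewrite Htau in A.
    destruct A as [A|A]; auto. exfalso.
    assert (B := Huniq s Hs _ _ (Htau s) A). lra. }
  exists (Rmin Fp (-Fm) / (K+1)). split.
  { apply Rdiv_lt_0_compat; [apply Rmin_glb_lt|]; lra. }
  intros s' Hs' Hd.
  assert (Hm1 := Rmin_l Fp (-Fm)). assert (Hm2 := Rmin_r Fp (-Fm)).
  assert (Hd2 : Rabs (s' - s) * (K + 1) < Rmin Fp (-Fm)).
  { apply (Rmult_lt_compat_r (K+1)) in Hd; [|lra]. unfold Rdiv in Hd.
    rewrite Rmult_assoc, Rinv_l in Hd by lra. lra. }
  assert (Pa := Rabs_pos (s' - s)).
  assert (L1 := Hlip s' s (tau s + eps)). fold Fp in L1.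
  assert (L2 := Hlip s' s (tau s - eps)). fold Fm in L2.
  assert (P1 : 0 < F s' (tau s + eps)).
  { apply abs_le_inv in L1. nra. }
  assert (P2 : F s' (tau s - eps) < 0).
  { apply abs_le_inv in L2. nra. }
  assert (Q1 : tau s' < tau s + eps).
  { destruct (Rlt_le_dec (tau s') (tau s + eps)) as [h|h]; auto.
    assert (A := Hmon s' _ _ h). rewrite Htau in A. lra. }
  assert (Q2 : tau s - eps < tau s').
  { destruct (Rlt_le_dec (tau s - eps) (tau s')) as [h|h]; auto.
    assert (A := Hmon s' _ _ h). rewrite Htau in A. lra. }
  unfold Rabs; destruct (Rcase_abs (tau s' - tau s)); lra.
Qed.
Lemma centers_apart N (HN : is_norm N) d W0 lp W1 lq c : d <> vzero ->
  (forall u, -1 <= u <= 0 -> N (vadd W0 (vscal u d)) = lp) ->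
  (forall u, N (vadd W0 (vscal u d)) = lp -> -1 <= u <= 0) ->
  (forall u, -1 <= u <= 0 -> N (vadd W1 (vscal u d)) = lq) ->
  W1 = vadd W0 (vscal c d) -> c = 0.
Proof.
  intros Hd F0 X0 F1 EW.
  assert (E : forall u, N (vadd W1 (vscal u d)) = N (vadd W0 (vscal (u + c) d))).
  { intro u. f_equal. rewrite EW. peq. }
  assert (G0 := flat_ge _ (h_cvx N HN W0 d) (-1) 0 lp ltac:(lra) F0).
  assert (G1 := flat_ge _ (h_cvx N HN W1 d) (-1) 0 lq ltac:(lra) F1).
  simpl in G0, G1.
  assert (A1 := G1 (-c)). rewrite E in A1. replace (-c + c) with 0 in A1 by ring.
  rewrite F0 in A1 by lra.
  assert (A2 := G0 c). rewrite <- (Rplus_0_l c) in A2. rewrite <- E, F1 in A2 by lra.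
  assert (A3 := F1 0 ltac:(lra)). rewrite E in A3. replace (0 + c) with c in A3 by ring.
  assert (A4 := F1 (-1) ltac:(lra)). rewrite E in A4.
  assert (B1 := X0 c ltac:(lra)). assert (B2 := X0 (-1 + c) ltac:(lra)).
  lra.
Qed.

Lemma strip_char (p q d : pt) z : conv (union (line_dir p d) (line_dir q d)) z <->
  exists s t, 0 <= s <= 1 /\ z = vadd p (vadd (vscal s (vsub q p)) (vscal t d)).
Proof.
  split.
  - intro H. apply H.
    + intros u v a [s1 [t1 [Hs1 ->]]] [s2 [t2 [Hs2 ->]]] Ha.
      exists ((1-a)*s1 + a*s2), ((1-a)*t1 + a*t2). split; [nra|]. peq.
    + intros w [[t ->]|[t ->]].
      * exists 0, t. split; [lra|]. peq.
      * exists 1, t. split; [lra|]. peq.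
  - intros [s [t [Hs ->]]] B HB Hsub.
    replace (vadd p (vadd (vscal s (vsub q p)) (vscal t d))) with
      (vadd (vscal (1-s) (vadd p (vscal t d))) (vscal s (vadd q (vscal t d)))) by peq.
    apply HB; auto; apply Hsub; [left|right]; exists t; reflexivity.
Qed.

Lemma g_val d p e s t : kap d e <> 0 ->
  kap d (vsub (vadd p (vadd (vscal s e) (vscal t d))) p) / kap d e = s.
Proof.
  intro H. replace (vsub (vadd p (vadd (vscal s e) (vscal t d))) p) with
    (vadd (vscal s e) (vscal t d)) by peq.
  rewrite kap_add, kap_scal, kap_dd. field. auto.
Qed.

Definition Fz N W0 e d s t :=
  N (vadd (vadd W0 (vscal s e)) (vscal t d)) - N (vadd (vadd W0 (vscal s e)) (vscal (t-1) d)).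
Lemma abs_comb a b s : 0 <= s <= 1 -> Rabs (a + s * (b - a)) <= (1-s) * Rabs a + s * Rabs b.
Proof.
  intro Hs. replace (a + s*(b-a)) with ((1-s)*a + s*b) by ring.
  eapply Rle_trans; [apply Rabs_triang|].
  rewrite !Rabs_mult, (Rabs_pos_eq s), (Rabs_pos_eq (1-s)) by lra. lra.
Qed.

Lemma Fz_uniq N (HN : is_norm N) d W0 e lp lq : d <> vzero -> 0 < lp -> 0 < lq ->
  (forall u, -1 <= u <= 0 -> N (vadd W0 (vscal u d)) = lp) ->
  (forall u, N (vadd W0 (vscal u d)) = lp -> -1 <= u <= 0) ->
  (forall u, -1 <= u <= 0 -> N (vadd (vadd W0 (vscal 1 e)) (vscal u d)) = lq) ->
  (forall u, N (vadd (vadd W0 (vscal 1 e)) (vscal u d)) = lq -> -1 <= u <= 0) ->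
  forall s, 0 <= s <= 1 -> forall t1 t2, Fz N W0 e d s t1 = 0 -> Fz N W0 e d s t2 = 0 -> t1 = t2.
Proof.
  intros Hd Hlp Hlq F0 X0 F1 X1 s Hs.
  assert (Cl : forall t1 t2, t1 < t2 -> Fz N W0 e d s t1 = 0 -> Fz N W0 e d s t2 = 0 -> False).
  { intros t1 t2 H12 Z1 Z2. unfold Fz in Z1, Z2.
    set (W := vadd W0 (vscal s e)) in *.
    set (h := fun t => N (vadd W (vscal t d))).
    assert (Fl := two_zeros_flat h (h_cvx N HN W d) t1 t2 H12 ltac:(unfold h; lra) ltac:(unfold h; lra)).
    unfold h in Fl.
    assert (KW : kap d W = kap d W0 + s * (kap d (vadd W0 (vscal 1 e)) - kap d W0)).
    { unfold W. rewrite !kap_add, !kap_scal. ring. }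
    assert (AC := abs_comb (kap d W0) (kap d (vadd W0 (vscal 1 e))) s Hs).
    rewrite <- KW in AC.
    destruct (Rle_dec (Rabs (kap d (vadd W0 (vscal 1 e)))) (Rabs (kap d W0))).
    - apply (core N HN d W0 lp W (t1-1) t2 (N (vadd W (vscal t1 d))) Hd Hlp F0 X0); try lra; auto.
      nra.
    - apply (core N HN d (vadd W0 (vscal 1 e)) lq W (t1-1) t2 (N (vadd W (vscal t1 d))) Hd Hlq F1 X1); try lra; auto.
      nra. }
  intros t1 t2 Z1 Z2.
  destruct (Rtotal_order t1 t2) as [H|[H|H]]; auto; exfalso.
  - exact (Cl t1 t2 H Z1 Z2).
  - exact (Cl t2 t1 H Z2 Z1).
Qed.

Lemma Fz_mono N (HN : is_norm N) W0 e d : forall s t t', t <= t' -> Fz N W0 e d s t <= Fz N W0 e d s t'.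
Proof. intros s t t' H. unfold Fz. apply (F_mono _ (h_cvx N HN _ d)); auto. Qed.

Lemma Fz_lip N (HN : is_norm N) W0 e d : forall s s' t,
  Rabs (Fz N W0 e d s t - Fz N W0 e d s' t) <= (2 * N e) * Rabs (s - s').
Proof.
  intros s s' t. unfold Fz.
  assert (L : forall u, Rabs (N (vadd (vadd W0 (vscal s e)) (vscal u d)) - N (vadd (vadd W0 (vscal s' e)) (vscal u d))) <= N e * Rabs (s - s')).
  { intro u. eapply Rle_trans; [apply (N_rev N HN)|].
    replace (vsub (vadd (vadd W0 (vscal s e)) (vscal u d)) (vadd (vadd W0 (vscal s' e)) (vscal u d)))
      with (vscal (s - s') e) by peq.
    rewrite (N_scal N HN). lra. }
  assert (A1 := L t). assert (A2 := L (t-1)).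
  match goal with |- Rabs (?a - ?b - (?c - ?dd)) <= _ =>
    replace (a - b - (c - dd)) with ((a - c) - (b - dd)) by ring end.
  eapply Rle_trans; [apply Rabs_triang|]. rewrite Rabs_Ropp. lra.
Qed.
Theorem proposition2p4 (N : pt -> R) (x y p q : pt) :
  is_norm N ->
  x <> y ->
  (exists a b, a <> b /\ subset (segment a b) (unit_circle N) /\
               parallel (vsub b a) (vsub y x)) ->
  p <> q ->
  center_of_maximal_circle N x y p ->
  center_of_maximal_circle N x y q ->
  arc_from_to N
    (inter (bis N x y)
           (conv (union (line_dir p (vsub y x)) (line_dir q (vsub y x)))))
    p q.
Proof.
  intros HN Hxy _ Hpq [lp [Hlp Mp]] [lq [Hlq Mq]].
  assert (Hd := sub_nz x y Hxy).
  destruct (circ_flat N HN x y p lp Hxy Mp) as [Fp Xp].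
  destruct (circ_flat N HN x y q lq Hxy Mq) as [Fq Xq].
  set (d := vsub y x) in *.
  set (W0 := vsub p x) in *. set (e := vsub q p).
  assert (EW1 : vsub q x = vadd W0 (vscal 1 e)) by (unfold W0, e; peq).
  rewrite EW1 in Fq, Xq.
  assert (Hke : kap d e <> 0).
  { intro Hk. destruct (kap0_par d e Hd Hk) as [c Hc].
    assert (c = 0).
    { apply (centers_apart N HN d W0 lp (vadd W0 (vscal 1 e)) lq c Hd Fp Xp Fq).
      rewrite Hc. peq. }
    subst c. apply Hpq. replace q with (vadd p e) by (unfold e; peq).
    rewrite Hc. peq. }
  assert (Hex : forall s, exists t, Fz N W0 e d s t = 0).
  { intro s. apply zero_exists; auto. }
  pose (tau := fun s => proj1_sig (constructive_indefinite_description _ (Hex s))).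
  assert (Htau : forall s, Fz N W0 e d s (tau s) = 0).
  { intro s. unfold tau. exact (proj2_sig (constructive_indefinite_description _ (Hex s))). }
  clearbody tau.
  assert (Huniq := Fz_uniq N HN d W0 e lp lq Hd Hlp Hlq Fp Xp Fq Xq).
  assert (Hcont := tau_cont (Fz N W0 e d) tau (2 * N e)
    ltac:(pose proof (N_nonneg N HN e); lra) (Fz_mono N HN W0 e d) Huniq (Fz_lip N HN W0 e d) Htau).
  assert (Bis : forall s t, bis N x y (vadd p (vadd (vscal s e) (vscal t d))) <-> Fz N W0 e d s t = 0).
  { intros s t. unfold bis, Fz.
    replace (vsub (vadd p (vadd (vscal s e) (vscal t d))) x) with
      (vadd (vadd W0 (vscal s e)) (vscal t d)) by (unfold W0, d; peq).
    replace (vsub (vadd p (vadd (vscal s e) (vscal t d))) y) with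
      (vadd (vadd W0 (vscal s e)) (vscal (t-1) d)) by (unfold W0, d; peq).
    split; intro; lra. }
  assert (InA : forall z, inter (bis N x y) (conv (union (line_dir p d) (line_dir q d))) z <->
    exists s, 0 <= s <= 1 /\ z = vadd p (vadd (vscal s e) (vscal (tau s) d))).
  { intro z. split.
    - intros [Hb Hc]. apply strip_char in Hc. destruct Hc as [s [t [Hs Hz]]].
      fold e in Hz. subst z. apply Bis in Hb.
      exists s. split; auto. rewrite (Huniq s Hs t (tau s) Hb (Htau s)). reflexivity.
    - intros [s [Hs ->]]. split.
      + apply Bis. apply Htau.
      + apply strip_char. exists s, (tau s). split; auto. }
  assert (Htau0 : tau 0 = 0).
  { apply (Huniq 0 ltac:(lra)); auto. unfold Fz.
    replace (vadd W0 (vscal 0 e)) with W0 by peq.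
    rewrite Fp, Fp by lra. ring. }
  assert (Htau1 : tau 1 = 0).
  { apply (Huniq 1 ltac:(lra)); auto. unfold Fz.
    rewrite Fq, Fq by lra. ring. }
  assert (Sup := support N HN W0 d (-1) 0 lp Hd ltac:(lra) Fp).
  assert (K0 := flat_kap N HN W0 d (-1) 0 lp Hd ltac:(lra) Fp).
  exists (fun s => vadd p (vadd (vscal s e) (vscal (tau s) d))).
  exists (fun z => kap d (vsub z p) / kap d e).
  split; [|split; [|split; [|split; [|split; [|split]]]]].
  - intros t Ht. apply InA. exists t. auto.
  - intros z Hz. apply InA in Hz. destruct Hz as [s [Hs ->]]. rewrite g_val; auto.
  - intros t Ht. apply g_val; auto.
  - intros z Hz. apply InA in Hz. destruct Hz as [s [Hs ->]]. rewrite g_val; auto.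
  - intros t Ht eps Heps.
    destruct (Hcont t Ht (eps / (2 * (N d + 1)))) as [del1 [Hdel1 H1]].
    { apply Rdiv_lt_0_compat; [lra|]. pose proof (N_nonneg N HN d). lra. }
    exists (Rmin del1 (eps / (2 * (N e + 1)))). split.
    { apply Rmin_glb_lt; auto. apply Rdiv_lt_0_compat; [lra|]. pose proof (N_nonneg N HN e). lra. }
    intros s Hs Hst.
    assert (Hs1 := H1 s Hs (Rlt_le_trans _ _ _ Hst (Rmin_l _ _))).
    assert (Hs2 := Rlt_le_trans _ _ _ Hst (Rmin_r _ _)).
    replace (vsub (vadd p (vadd (vscal s e) (vscal (tau s) d))) (vadd p (vadd (vscal t e) (vscal (tau t) d))))
      with (vadd (vscal (s - t) e) (vscal (tau s - tau t) d)) by peq.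
    eapply Rle_lt_trans; [apply (N_tri N HN)|]. rewrite !(N_scal N HN).
    assert (Ne := N_nonneg N HN e). assert (Nd := N_nonneg N HN d).
    assert (A1 : Rabs (s - t) * (2 * (N e + 1)) < eps).
    { apply (Rmult_lt_compat_r (2 * (N e + 1))) in Hs2; [|lra]. unfold Rdiv in Hs2.
      rewrite Rmult_assoc, Rinv_l in Hs2 by lra. lra. }
    assert (A2 : Rabs (tau s - tau t) * (2 * (N d + 1)) < eps).
    { apply (Rmult_lt_compat_r (2 * (N d + 1))) in Hs1; [|lra]. unfold Rdiv in Hs1.
      rewrite Rmult_assoc, Rinv_l in Hs1 by lra. lra. }
    assert (P1 := Rabs_pos (s - t)). assert (P2 := Rabs_pos (tau s - tau t)).
    nra.
  - intros z Hz eps Heps.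
    assert (A0 := Rabs_pos_lt _ K0). assert (Ae := Rabs_pos_lt _ Hke).
    exists (eps * lp * Rabs (kap d e) / (Rabs (kap d W0) + 1)). split.
    { apply Rdiv_lt_0_compat; [|lra]. apply Rmult_lt_0_compat; [|lra]. nra. }
    intros w Hw Hwz.
    replace (kap d (vsub w p) / kap d e - kap d (vsub z p) / kap d e) with
      (kap d (vsub w z) / kap d e) by (rewrite !kap_sub; field; auto).
    assert (S := Sup (vsub w z)).
    assert (Nv := N_nonneg N HN (vsub w z)).
    assert (B : N (vsub w z) * (Rabs (kap d W0) + 1) < eps * lp * Rabs (kap d e)).
    { apply (Rmult_lt_compat_r (Rabs (kap d W0) + 1)) in Hwz; [|lra]. unfold Rdiv in Hwz.
      rewrite Rmult_assoc, Rinv_l in Hwz by lra. lra. }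
    assert (C : lp * Rabs (kap d (vsub w z)) < eps * lp * Rabs (kap d e)) by nra.
    assert (C2 : Rabs (kap d (vsub w z)) < eps * Rabs (kap d e)) by nra.
    unfold Rdiv. rewrite Rabs_mult, Rabs_inv.
    apply (Rmult_lt_reg_r (Rabs (kap d e))); [lra|].
    rewrite Rmult_assoc, Rinv_l by lra. lra.
  - split; [rewrite Htau0; peq | rewrite Htau1; unfold e; peq].
Qed.
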